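(* Let $S=\langle P,\varphi\rangle$ be a SUT model, $t$ a strength and $N\ge 1$ an integer. The propositional formula $Sat_{CX}^{N,t,S}=X\wedge C\wedge CX\wedge SUTX$ (defined in the context) is satisfiable if and only if a covering array $CA(N;t,S)$ exists.
   Context: A SUT model is $S=\langle P,\varphi\rangle$, where $P$ is a finite set of parameters, each $p\in P$ having a finite nonempty domain $d(p)$, and $\varphi$ is a propositional formula whose atoms have the form $(p=v)$ with $p\in P$, $v\in d(p)$. A test case is a full assignment $A$ giving each $p\in P$ a value in $d(p)$ such that $\varphi$ evaluates to true when each atom $(p=v)$ is read as true iff $A(p)=v$; it is assumed that at least one test case exists. Fix a strength $t$ with $1\le t\le |P|$. A $t$-tuple is an assignment of values (from their domains) to exactly $t$ distinct parameters, viewed as a set of pairs $(p,v)$. A test case covers a $t$-tuple $\tau$ if it assigns $v$ to $p$ for every $(p,v)\in\tau$. A $t$-tuple is allowed if some test case covers it (forbidden otherwise); $\mathcal{T}_a$ denotes the set of allowed $t$-tuples. A covering array $CA(N;t,S)$ is a list of $N$ test cases (repetitions allowed) such that every allowed $t$-tuple is covered by at least one of them. Write $[N]=\{1,\dots,N\}$. Propositional variables: $x_{i,p,v}$ for $i\in[N]$, $p\in P$, $v\in d(p)$ (meaning ''test $i$ assigns $v$ to $p$''), and $c^i_\tau$ for $i\in[N]$, $\tau\in\mathcal T_a$. Constraints (each read as a Boolean constraint; any CNF translation, possibly with auxiliary variables, preserving satisfiability may be used): (X) for every $i\in[N]$ and $p\in P$: exactly one of $\{x_{i,p,v}: v\in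 d(p)\}$ is true; (SUTX) for every $i\in[N]$: the formula $\varphi_i$ obtained from $\varphi$ by replacing every atom $(p=v)$ with $x_{i,p,v}$; (CX) for every $i\in[N]$, $\tau\in\mathcal T_a$, $(p,v)\in\tau$: $c^i_\tau\rightarrow x_{i,p,v}$; (C) for every $\tau\in\mathcal T_a$: $\bigvee_{i\in[N]} c^i_\tau$. *)

(* Defs.v *)
From mathcomp Require Import all_boot.
Set Implicit Arguments. Unset Strict Implicit. Unset Printing Implicit Defensive.

Inductive form (A : Type) : Type :=
  | FTrue | FFalse
  | Atom of A
  | Not of form A
  | And of form A & form A
  | Or of form A & form A
  | Imp of form A & form A.
Arguments FTrue {A}. Arguments FFalse {A}.

Fixpoint eval (A : Type) (s : A -> bool) (f : form A) : bool :=
  match f with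
  | FTrue => true
  | FFalse => false
  | Atom a => s a
  | Not g => ~~ eval s g
  | And g h => eval s g && eval s h
  | Or g h => eval s g || eval s h
  | Imp g h => eval s g ==> eval s h
  end.

Fixpoint map_form (A B : Type) (r : A -> B) (f : form A) : form B :=
  match f with
  | FTrue => FTrue
  | FFalse => FFalse
  | Atom a => Atom (r a)
  | Not g => Not (map_form r g)
  | And g h => And (map_form r g) (map_form r h)
  | Or g h => Or (map_form r g) (map_form r h)
  | Imp g h => Imp (map_form r g) (map_form r h)
  end.

Definition bigAnd (A : Type) (l : seq (form A)) : form A := foldr (@And A) FTrue l.
Definition bigOr (A : Type) (l : seq (form A)) : form A := foldr (@Or A) FFalse l.

Definition satisfiable (A : Type) (f : form A) : Prop := exists s : A -> bool, eval s f.

(* SUT model: parameters P (finite), domain V p of each parameter (finite),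
   constraint phi whose atoms (p = v) are dependent pairs (p; v). *)
Section SUT.
Variables (P : finType) (V : P -> finType).

Definition atom := {p : P & V p}.
Definition assignment := {dffun forall p : P, V p}.

Definition atom_true (A : assignment) (a : atom) : bool := Tagged V (A (tag a)) == a.

Definition test_case (phi : form atom) (A : assignment) : bool := eval (atom_true A) phi.

Definition is_ttuple (t : nat) (tau : {set atom}) : bool :=
  (#|tau| == t) && (#|[set tag x | x in tau]| == t).

Definition covers (A : assignment) (tau : {set atom}) : bool :=
  [forall x in tau, atom_true A x].

Definition allowed (phi : form atom) (t : nat) (tau : {set atom}) : bool :=
  is_ttuple t tau && [exists A : assignment, test_case phi A && covers A tau].

Definition is_covering_array (phi : form atom) (t N : nat) (CA : 'I_N -> assignment) : Prop :=
  (forall i, test_case phi (CA i)) /\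
  (forall tau, allowed phi t tau -> exists i, covers (CA i) tau).

(* Variables of Sat_CX: inl (i, (p;v)) is x_{i,p,v}; inr (i, tau) is c^i_tau *)
Definition satvar (N : nat) : Type := ('I_N * atom) + ('I_N * {set atom}).

Definition xv (N : nat) (i : 'I_N) (a : atom) : form (satvar N) := Atom (inl (i, a)).
Definition cv (N : nat) (i : 'I_N) (tau : {set atom}) : form (satvar N) := Atom (inr (i, tau)).

Definition Ta (phi : form atom) (t : nat) : seq {set atom} :=
  [seq tau <- enum {set atom} | allowed phi t tau].

Definition X_constr (N : nat) : form (satvar N) :=
  bigAnd [seq And (bigOr [seq xv i (Tagged V v) | v <- enum (V p)])
                  (bigAnd [seq Not (And (xv i (Tagged V v)) (xv i (Tagged V w)))
                          | v <- enum (V p), w <- [seq w <- enum (V p) | v != w]])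
         | i <- enum 'I_N, p <- enum P].

Definition SUTX_constr (phi : form atom) (N : nat) : form (satvar N) :=
  bigAnd [seq map_form (fun a => (inl (i, a) : satvar N)) phi | i <- enum 'I_N].

Definition CX_constr (phi : form atom) (t N : nat) : form (satvar N) :=
  bigAnd [seq bigAnd [seq Imp (cv i tau) (xv i a) | a <- enum tau]
         | i <- enum 'I_N, tau <- Ta phi t].

Definition C_constr (phi : form atom) (t N : nat) : form (satvar N) :=
  bigAnd [seq bigOr [seq cv i tau | i <- enum 'I_N] | tau <- Ta phi t].

Definition SatCX (phi : form atom) (t N : nat) : form (satvar N) :=
  And (X_constr N) (And (C_constr phi t N) (And (CX_constr phi t N) (SUTX_constr phi N))).

End SUT.

(* Main.v *)
Require Import Defs.
From mathcomp Require Import all_boot.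
Set Implicit Arguments. Unset Strict Implicit. Unset Printing Implicit Defensive.

Lemma eval_bigAnd (A : Type) (s : A -> bool) l : eval s (bigAnd l) = all (eval s) l.
Proof. by elim: l => //= f l ->. Qed.

Lemma eval_bigOr (A : Type) (s : A -> bool) l : eval s (bigOr l) = has (eval s) l.
Proof. by elim: l => //= f l ->. Qed.

Lemma eval_map_form (A B : Type) (r : A -> B) s f :
  eval s (map_form r f) = eval (fun a => s (r a)) f.
Proof. by elim: f => //= [g -> | g -> h -> | g -> h -> | g -> h ->]. Qed.

Lemma eq_eval (A : Type) (s1 s2 : A -> bool) f : s1 =1 s2 -> eval s1 f = eval s2 f.
Proof. by move=> E; elim: f => /= [||a|g ->|g -> h ->|g -> h ->|g -> h ->]. Qed.

Lemma atom_trueE (P : finType) (V : P -> finType) (A : assignment V) p (v : V p) :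
  atom_true A (Tagged V v) = (A p == v).
Proof. by rewrite /atom_true eq_Tagged. Qed.

Lemma mem_Ta (P : finType) (V : P -> finType) phi t tau :
  (tau \in Ta (V:=V) phi t) = allowed phi t tau.
Proof. by rewrite /Ta mem_filter mem_enum andbT. Qed.

Theorem proposition1 (P : finType) (V : P -> finType) (phi : form (atom V))
    (t N : nat)
    (Hdom : forall p : P, 0 < #|V p|)
    (Hex : exists A : assignment V, test_case phi A)
    (Ht1 : 1 <= t) (Ht2 : t <= #|P|) (HN : 1 <= N) :
  satisfiable (SatCX phi t N) <->
  exists CA : 'I_N -> assignment V, is_covering_array phi t CA.
Proof.
split.
- move=> [s]; rewrite /SatCX /= => /and4P [HX HC HCX HS].
  move: HX; rewrite /X_constr eval_bigAnd => /all_allpairsP HX.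
  have HXi : forall (i : 'I_N) p, (exists v : V p, s (inl (i, Tagged V v)))
      /\ (forall v w : V p, s (inl (i, Tagged V v)) -> s (inl (i, Tagged V w)) -> v = w).
    move=> i p; have := HX i p (mem_enum _ _) (mem_enum _ _).
    rewrite /= eval_bigOr eval_bigAnd => /andP [Hx0 /all_allpairsP Hu].
    move: Hx0; rewrite has_map => /hasP [x _ Hx].
    split; first by exists x.
    move=> v w Hv Hw; apply/eqP/negPn/negP => Hne.
    have := Hu v w (mem_enum _ _); rewrite mem_filter Hne mem_enum => /(_ isT).
    by rewrite /= /xv /= Hv Hw.
  pose CA (i : 'I_N) : assignment V :=
    [ffun p => odflt (enum_val (Ordinal (Hdom p))) [pick v | s (inl (i, Tagged V v))]].
  have key : forall i a, atom_true (CA i) a = s (inl (i, a)).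
    move=> i [p v]; rewrite (atom_trueE (CA i) v) /CA ffunE.
    case: pickP => [w Hw | Hn] /=.
      apply/idP/idP => [/eqP <- // | Hv].
      by apply/eqP; apply: (proj2 (HXi i p)).
    have [[w Hw] _] := HXi i p; by rewrite Hn in Hw.
  exists CA; split.
  + move=> i; move: HS; rewrite /SUTX_constr eval_bigAnd all_map => /allP /(_ i (mem_enum _ _)).
    rewrite /= eval_map_form /test_case => H.
    by rewrite (eq_eval _ (key i)).
  + move=> tau Htau.
    have Hin : tau \in Ta phi t by rewrite mem_Ta.
    move: HC; rewrite /C_constr eval_bigAnd all_map => /allP /(_ tau Hin).
    rewrite /= eval_bigOr has_map => /hasP [i _ /= Hc].
    exists i; apply/forallP => a; apply/implyP => Ha.
    move: HCX; rewrite /CX_constr eval_bigAnd => /all_allpairsP /(_ i tau (mem_enum _ _) Hin).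
    rewrite /= eval_bigAnd all_map => /allP /(_ a); rewrite mem_enum => /(_ Ha) /=.
    by rewrite /cv /xv /= Hc key.
- move=> [CA [HT Hcov]].
  pose s (x : satvar V N) : bool :=
    match x with inl (i, a) => atom_true (CA i) a | inr (i, tau) => covers (CA i) tau end.
  exists s; rewrite /SatCX /=; apply/and4P; split.
  + rewrite /X_constr eval_bigAnd; apply/all_allpairsP => i p _ _ /=.
    rewrite eval_bigOr eval_bigAnd; apply/andP; split.
      rewrite has_map; apply/hasP; exists (CA i p); first by rewrite mem_enum.
      by rewrite /= /xv /= atom_trueE.
    apply/all_allpairsP => v w _; rewrite mem_filter => /andP [Hne _] /=.
    rewrite /xv /= !atom_trueE; apply/negP => /andP [/eqP E1 /eqP E2].
    by rewrite -E1 -E2 eqxx in Hne.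
  + rewrite /C_constr eval_bigAnd all_map; apply/allP => tau; rewrite mem_Ta => /Hcov [i Hi].
    by rewrite /= eval_bigOr has_map; apply/hasP; exists i; rewrite ?mem_enum.
  + rewrite /CX_constr eval_bigAnd; apply/all_allpairsP => i tau _ _ /=.
    rewrite eval_bigAnd all_map; apply/allP => a; rewrite mem_enum => Ha /=.
    apply/implyP => /forallP /(_ a); by rewrite Ha.
  + rewrite /SUTX_constr eval_bigAnd all_map; apply/allP => i _ /=.
    by rewrite eval_map_form; exact: HT.
Qed.
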